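(* Let $p\ge1$, $n\ge1$, $i\in\{1,\dots,p\}$, and let $C_n^i$ be the cycle of the Schreier graph $\Gamma^p_n$ with vertex set $\{0,i\}^n$ and the edges labelled $e_i$ between them. Let $\phi_n^i$ be the nontrivial automorphism (reflection) of the cycle $C_n^i$ fixing $0^n$. Then for every vertex $v$ of $C_n^i$, the decorations attached at $v$ and at $\phi_n^i(v)$ are isomorphic graphs. Moreover, the vertices $v'$ of $C_n^i$ with $d(0^n,v')=d(0^n,v)$ are exactly $v$ and $\phi_n^i(v)$.
   Context: $X=\{0,1,\dots,p\}$; the star automaton group $\mathcal G_{S_p}$ is generated by the transformations $e_1,\dots,e_p$ of $X^\ast$ defined recursively by $e_i(0w)=i\,e_i(w)$, $e_i(iw)=0w$, $e_i(jw)=jw$ for $j\notin\{0,i\}$. $\Gamma^p_n$ has vertex set $X^n$ and, for each $v$ and each $j$, an edge labelled $e_j$ joining $v$ and $e_j(v)$ (loops allowed). $C_n^i$ is the $e_i$-orbit of $0^n$, a cycle of length $2^n$. For a vertex $v$ of $C_n^i$, the decoration attached at $v$ is the connected component containing $v$ of the graph obtained from $\Gamma^p_n$ by deleting the edges of $C_n^i$. $d$ denotes the graph distance in $\Gamma^p_n$. *)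

(* Defs.v *)
From mathcomp Require Import all_boot.
Set Implicit Arguments. Unset Strict Implicit. Unset Printing Implicit Defensive.

(* Alphabet X = {0,...,p} is 'I_p.+1; the generators e_1..e_p are indexed by
   j : 'I_p, generator e_j acting with the letter [gen j] = j+1. *)
Definition gen (p : nat) (j : 'I_p) : 'I_p.+1 := lift ord0 j.

Fixpoint act (p : nat) (a : 'I_p.+1) (w : seq 'I_p.+1) : seq 'I_p.+1 :=
  match w with
  | [::] => [::]
  | b :: w' => if b == ord0 then a :: act a w'
               else if b == a then ord0 :: w' else b :: w'
  end.

Lemma size_act (p : nat) (a : 'I_p.+1) w : size (act a w) = size w.
Proof. by elim: w => [|b w IH] //=; case: ifP => _ /=; [rewrite IH|case: ifP]. Qed.

Lemma size_act_tuple (p n : nat) (a : 'I_p.+1) (v : n.-tuple 'I_p.+1) :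
  size (act a v) == n.
Proof. by rewrite size_act size_tuple. Qed.

Definition vert (p n : nat) := (n.-tuple 'I_p.+1)%type.

Definition eact (p n : nat) (j : 'I_p) (v : vert p n) : vert p n :=
  Tuple (size_act_tuple (gen j) v).

Definition zero (p n : nat) : vert p n := nseq_tuple n ord0.

(* Edges of Gamma^p_n: one edge (v, j) for each vertex v and label j,
   joining v and e_j(v) (loops and multiple edges allowed). *)
Definition edge (p n : nat) := (vert p n * 'I_p)%type.
Definition src (p n : nat) (e : edge p n) : vert p n := e.1.
Definition tgt (p n : nat) (e : edge p n) : vert p n := eact e.2 e.1.

Definition adj (p n : nat) : rel (vert p n) :=
  fun x y => [exists j : 'I_p, (eact j x == y) || (eact j y == x)].

(* graph distance in Gamma^p_n: least k such that a walk of length k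
   joins x to y (the graph is finite, so k < #|vertices| if reachable;
   unreachable pairs would get #|vertices|, which does not occur since
   Gamma^p_n is connected). *)
Definition dist (p n : nat) (x y : vert p n) : nat :=
  find (fun k => [exists s : k.-tuple (vert p n),
                     path (@adj p n) x s && (last x s == y)])
       (iota 0 #|{: vert p n}|).

Definition inC (p n : nat) (i : 'I_p) (v : vert p n) : bool :=
  fconnect (eact i) (zero p n) v.

Definition isCedge (p n : nat) (i : 'I_p) (e : edge p n) : bool :=
  (e.2 == i) && inC i e.1.

Definition adjD (p n : nat) (i : 'I_p) : rel (vert p n) :=
  fun x y => [exists j : 'I_p,
    (~~ isCedge i (x, j) && (eact j x == y)) ||
    (~~ isCedge i (y, j) && (eact j y == x))].

Definition decV (p n : nat) (i : 'I_p) (v : vert p n) : {set vert p n} :=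
  [set x | connect (adjD i) v x].
Definition decE (p n : nat) (i : 'I_p) (v : vert p n) : {set edge p n} :=
  [set e | ~~ isCedge i e & src e \in decV i v].

Definition mult (p n : nat) (F : {set edge p n}) (x y : vert p n) : nat :=
  #|[set e in F | ((src e == x) && (tgt e == y)) ||
                  ((src e == y) && (tgt e == x))]|.

(* (undirected, unlabelled) multigraph isomorphism between (A, F) and (B, G),
   where all edges of F (resp. G) have their endpoints in A (resp. B) *)
Definition graph_iso (p n : nat) (A B : {set vert p n})
    (F G : {set edge p n}) : Prop :=
  exists f : vert p n -> vert p n,
    [/\ {in A &, injective f}, f @: A = B &
        {in A &, forall x y, mult F x y = mult G (f x) (f y)}].

(* the reflection phi_n^i of the cycle C_n^i fixing 0^n:
   e_i^k(0^n) |-> e_i^{-k}(0^n) *)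
Definition phi (p n : nat) (i : 'I_p) (v : vert p n) : vert p n :=
  let N := order (eact i) (zero p n) in
  iter ((N - findex (eact i) (zero p n) v) %% N) (eact i) (zero p n).

(* Main.v *)
Require Import Defs.
From mathcomp Require Import all_boot zify.
Set Implicit Arguments. Unset Strict Implicit. Unset Printing Implicit Defensive.

Definition bad (p : nat) (a : 'I_p.+1) (x : 'I_p.+1) := (x != ord0) && (x != a).

Fixpoint retr (p : nat) (a : 'I_p.+1) (u : seq 'I_p.+1) : seq 'I_p.+1 :=
  match u with
  | [::] => [::]
  | x :: u' => if has (bad a) u' then ord0 :: retr a u'
               else if bad a x then ord0 :: u' else x :: u'
  end.

Lemma size_retr p (a : 'I_p.+1) u : size (retr a u) = size u.
Proof. by elim: u => //= x u IH; case: ifP => _ /=; [rewrite IH | case: ifP]. Qed.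

Lemma retr_good p (a : 'I_p.+1) u : ~~ has (bad a) u -> retr a u = u.
Proof. by case: u => //= x u; rewrite negb_or => /andP[/negbTE -> /negbTE ->]. Qed.

Lemma retr_nobad p (a : 'I_p.+1) u : ~~ has (bad a) (retr a u).
Proof.
elim: u => //= x u IH; case: ifP => hu /=; first by [].
by case: ifP => hx /=; rewrite ?hx hu.
Qed.


Lemma hasbad_act p (a : 'I_p.+1) u : has (bad a) (act a u) = has (bad a) u.
Proof.
elim: u => //= x u IH; case: eqP => [->|hx] /=; first by rewrite /bad eqxx andbF IH.
case: eqP => [->|ha] //=; by rewrite /bad !eqxx andbF.
Qed.

Lemma retr_act p (a c : 'I_p.+1) u : c != ord0 ->
  retr a (act c u) = if has (bad a) u then retr a u
                     else if c == a then act a u else u.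
Proof.
move=> c0; elim: u => [|x u IH] /=; first by case: ifP.
case: eqP => [->|hx] /=.
- case hu: (has (bad a) u).
  + rewrite IH hu; case hau: (has (bad a) (act c u)) => //.
    have nca: c != a.
      by apply/eqP => ca; move: hau; rewrite ca hasbad_act hu.
    have -> : bad a c by rewrite /bad c0 nca.
    by rewrite -(retr_good (negbT hau)) IH hu.
  + rewrite hu in IH; case: eqP => [ca|/eqP nca].
      by subst c; rewrite hasbad_act hu /bad eqxx andbF.
    have bc : bad a c by rewrite /bad c0 nca.
    rewrite bc (negbTE nca) in IH *.
    case hau: (has (bad a) (act c u)); first by rewrite IH.
    by rewrite -(retr_good (negbT hau)) IH.
- case: eqP => [xc|nxc] /=.
  + subst x; case hu: (has (bad a) u); rewrite /= ?orbT //.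
    rewrite orbF.
    case bc: (bad a c) => //.
    by move: bc; rewrite /bad c0 /= => /negbFE ->.
  + case hu: (has (bad a) u); rewrite /= ?orbT // orbF.
    case bx: (bad a x) => //.
    case: eqP => [ca|] //; subst c.
    move: bx; rewrite /bad => /negbT; rewrite negb_and negbK.
    by move=> _; case: (x =P a) => // xa; case: nxc.
Qed.

Lemma act2 p (a : 'I_p.+1) x w : a != ord0 -> ~~ bad a x ->
  act a (act a (x :: w)) = x :: act a w.
Proof.
move=> a0; rewrite /bad negb_and !negbK => /orP[/eqP->|/eqP->] /=.
  by rewrite (negbTE a0) eqxx.
by rewrite (negbTE a0) eqxx.
Qed.

Lemma iter_double p (a : 'I_p.+1) x w t : a != ord0 -> ~~ bad a x ->
  iter (t.*2) (act a) (x :: w) = x :: iter t (act a) w.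
Proof.
move=> a0 hx; elim: t => //= t IH.
by rewrite IH act2.
Qed.

Lemma iter_period p (a : 'I_p.+1) w : a != ord0 -> ~~ has (bad a) w ->
  iter (2 ^ size w) (act a) w = w.
Proof.
move=> a0; elim: w => //= x w IH; rewrite negb_or => /andP[hx hw].
by rewrite expnS mul2n iter_double // IH.
Qed.

Lemma iter_reach p (a : 'I_p.+1) w : a != ord0 -> ~~ has (bad a) w ->
  exists t, iter t (act a) (nseq (size w) ord0) = w.
Proof.
move=> a0; elim: w => [|x w IH]; first by exists 0.
rewrite /= negb_or => /andP[hx hw].
have [t Ht] := IH hw.
have h0 : ~~ bad a ord0 by rewrite /bad eqxx.
have : x == ord0 \/ x == a by move: hx; rewrite /bad negb_and !negbK => /orP.
case=> /eqP ->.
  by exists t.*2; rewrite iter_double // Ht.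
exists ((2 ^ (size w).+1).-1 + t.*2); rewrite iterD iter_double // Ht.
have <- : act a (a :: w) = ord0 :: w by rewrite /= (negbTE a0) eqxx.
rewrite -iterSr prednK ?expn_gt0 //.
have -> : (size w).+1 = size (a :: w) by [].
by rewrite iter_period //= negb_or hw /bad eqxx andbF.
Qed.

Definition compc p (a : 'I_p.+1) (x : 'I_p.+1) : 'I_p.+1 :=
  if x == ord0 then a else if x == a then ord0 else x.

Lemma comp_act p (a : 'I_p.+1) x : a != ord0 -> ~~ has (bad a) x ->
  act a (map (compc a) (act a x)) = map (compc a) x.
Proof.
move=> a0; elim: x => //= y x IH; rewrite negb_or => /andP[hy hx].
have : y == ord0 \/ y == a by move: hy; rewrite /bad negb_and !negbK => /orP.
case=> /eqP ->; rewrite /= /compc ?eqxx (negbTE a0) /= ?eqxx ?(negbTE a0) //.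
by rewrite -/(compc a) IH.
Qed.

Lemma comp_good p (a : 'I_p.+1) x : ~~ has (bad a) x -> ~~ has (bad a) (map (compc a) x).
Proof.
elim: x => //= y x IH; rewrite !negb_or => /andP[hy hx]; rewrite IH // andbT.
move: hy; rewrite /bad /compc !negb_and !negbK.
by case: eqP => [_|]; rewrite ?eqxx ?orbT //; case: eqP => //; rewrite eqxx.
Qed.

Lemma act_cat_nz p (c : 'I_p.+1) y t : has (fun x => x != ord0) y ->
  act c (y ++ t) = act c y ++ t.
Proof.
elim: y => //= x y IH h; case: eqP => [x0|x0].
  by subst x; rewrite IH //; rewrite eqxx in h.
by case: ifP.
Qed.

Lemma act_nseq p (c : 'I_p.+1) k t :
  act c (nseq k ord0 ++ t) = nseq k c ++ act c t.
Proof. by elim: k => //= k ->. Qed.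

Lemma gen_neq0 p (j : 'I_p) : gen j != ord0.
Proof. by rewrite /gen eq_sym neq_lift. Qed.

Lemma gen_inj p : injective (@gen p).
Proof. exact: lift_inj. Qed.

Lemma val_iter p n (i : 'I_p) t (v : vert p n) :
  val (iter t (eact i) v) = iter t (act (gen i)) (val v).
Proof. by elim: t => //= t ->. Qed.

Lemma inCE p n (i : 'I_p) (v : vert p n) :
  inC i v = ~~ has (bad (gen i)) (val v).
Proof.
apply/idP/idP.
  move=> /iter_findex <-; rewrite val_iter.
  elim: (findex _ _ _) => /=; first by rewrite has_nseq /bad eqxx andbF.
  by move=> t IH; rewrite hasbad_act.
move=> h; have [t Ht] := iter_reach (gen_neq0 i) h.
have -> : v = iter t (eact i) (zero p n).
  by apply: val_inj; rewrite val_iter /= -Ht size_tuple.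
exact: fconnect_iter.
Qed.
Fixpoint actinv p (c : 'I_p.+1) (w : seq 'I_p.+1) : seq 'I_p.+1 :=
  match w with
  | [::] => [::]
  | x :: w' => if x == c then ord0 :: actinv c w'
               else if x == ord0 then c :: w' else x :: w'
  end.
Lemma act_inj p (c : 'I_p.+1) : c != ord0 -> injective (act c).
Proof.
move=> c0; apply: (can_inj (g := actinv c)).
elim=> [|x u IH] //=.
case: (x =P ord0) => [->|x0] /=; first by rewrite eqxx IH.
case: (x =P c) => [->|xc] /=; first by rewrite eq_sym (negbTE c0).
by case: (x =P c) => // _; case: (x =P ord0).
Qed.

Lemma eact_inj p n (j : 'I_p) : injective (@eact p n j).
Proof.
move=> u w /(congr1 val) /= /(act_inj (gen_neq0 j)); exact: val_inj.
Qed.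

Lemma rt_size p n (a : 'I_p.+1) (u : vert p n) : size (retr a u) == n.
Proof. by rewrite size_retr size_tuple. Qed.

Definition rt p n (i : 'I_p) (u : vert p n) : vert p n := Tuple (rt_size (gen i) u).

Lemma rt_edge p n (i j : 'I_p) (x : vert p n) :
  rt i (eact j x) = rt i x \/ rt i (eact j x) = eact i (rt i x).
Proof.
have := retr_act (gen i) (val x) (gen_neq0 j).
case: ifP => hb h.
  by left; apply: val_inj; rewrite /= h.
case: eqP h => [/gen_inj -> h|_ h].
  by right; apply: val_inj; rewrite /= h retr_good ?hb.
by left; apply: val_inj; rewrite /= h retr_good ?hb.
Qed.

Lemma rt_inC p n (i : 'I_p) (x : vert p n) : inC i (rt i x).
Proof. by rewrite inCE retr_nobad. Qed.

Lemma rt_id p n (i : 'I_p) (x : vert p n) : inC i x -> rt i x = x.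
Proof. by rewrite inCE => h; apply: val_inj; rewrite /= retr_good. Qed.

Definition NN p n (i : 'I_p) := order (@eact p n i) (zero p n).
Definition pos p n (i : 'I_p) (w : vert p n) := findex (eact i) (zero p n) w.
Definition del p n (i : 'I_p) (w : vert p n) := minn (pos i w) (NN n i - pos i w).

Lemma pos_lt p n (i : 'I_p) (w : vert p n) : inC i w -> pos i w < NN n i.
Proof. exact: findex_max. Qed.

Lemma pos_step p n (i : 'I_p) (w : vert p n) : inC i w ->
  (pos i (eact i w) = (pos i w).+1 /\ (pos i w).+1 < NN n i) \/
  (pos i (eact i w) = 0 /\ (pos i w).+1 = NN n i).
Proof.
move=> hw; have hl := pos_lt hw.
have He : eact i w = iter (pos i w).+1 (eact i) (zero p n).
  by rewrite iterS /pos iter_findex.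
case: (ltngtP (pos i w).+1 (NN n i)) => h.
- by left; split=> //; rewrite /pos He findex_iter.
- by move: h; rewrite ltnS leqNgt hl.
- right; split=> //; rewrite /pos He h /NN (iter_order (@eact_inj p n i)); exact: findex0.
Qed.

Lemma del_step p n (i : 'I_p) (w : vert p n) : inC i w ->
  del i (eact i w) <= (del i w).+1 /\ del i w <= (del i (eact i w)).+1.
Proof.
move=> hw; rewrite /del.
have := pos_lt hw.
case: (pos_step hw) => [[-> h]|[-> h]]; lia.
Qed.

Lemma del_adj p n (i : 'I_p) (x y : vert p n) : adj x y ->
  del i (rt i y) <= (del i (rt i x)).+1.
Proof.
case/existsP => j /orP [/eqP <- | /eqP <-].
  by case: (rt_edge i j x) => ->; [exact: leqnSn | exact: (del_step (rt_inC i x)).1].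
by case: (rt_edge i j y) => ->; [exact: leqnSn | exact: (del_step (rt_inC i y)).2].
Qed.

Lemma del_path p n (i : 'I_p) (x : vert p n) s : path (@adj p n) x s ->
  del i (rt i (last x s)) <= del i (rt i x) + size s.
Proof.
elim: s x => [|y s IH] x /=; first by rewrite addn0.
case/andP => hxy /IH h; have := del_adj i hxy; lia.
Qed.

Lemma find_iota_eq (P : pred nat) d m M : m <= d < m + M -> P d ->
  (forall k, m <= k < d -> ~~ P k) -> find P (iota m M) = d - m.
Proof.
elim: M m => [|M IH] m; first by rewrite addn0; case/andP=> h1 h2; lia.
move=> /andP[h1 h2] Pd hk /=.
case: (ltngtP m d) h1 => // hmd _.
  rewrite (negbTE (hk m _)) ?leqnn ?hmd // IH ?hmd //; first by lia.
    by rewrite addSnnS.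
  by move=> k /andP[hk1 hk2]; apply: hk; rewrite hk2 andbT ltnW.
by subst m; rewrite Pd subnn.
Qed.

Lemma zero_inC p n (i : 'I_p) : inC i (zero p n).
Proof. exact: connect0. Qed.

Lemma del_zero p n (i : 'I_p) : del i (zero p n) = 0.
Proof. by rewrite /del /pos findex0 min0n. Qed.

Lemma dist_del p n (i : 'I_p) (v : vert p n) : inC i v ->
  dist (zero p n) v = del i v.
Proof.
move=> hv; rewrite /dist.
have -> : del i v = del i v - 0 by rewrite subn0.
have hl := pos_lt hv.
apply: find_iota_eq.
- rewrite leq0n /=; apply: (@leq_trans (NN n i)); first by rewrite /del; lia.
  exact: max_card.
- apply/existsP; rewrite /del; case: (leqP (pos i v) (NN n i - pos i v)) => h.
    exists (Tuple (introT eqP (size_traject (eact i) (eact i (zero p n)) (pos i v)))).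
    rewrite /= last_traject /pos iter_findex // eqxx andbT.
    apply: (sub_path _ (fpath_traject _ _ _)) => x y /eqP <-.
    by apply/existsP; exists i; rewrite eqxx.
    pose f := finv (@eact p n i).
    exists (Tuple (introT eqP (size_traject f (f (zero p n)) (NN n i - pos i v)))).
    rewrite /= last_traject iter_finv ?leq_subr //.
    rewrite -/(NN n i) subKn ?(ltnW hl) // /pos iter_findex // eqxx andbT.
    apply: (sub_path _ (fpath_traject _ _ _)) => x y /eqP <-.
    apply/existsP; exists i; rewrite /f f_finv ?eqxx ?orbT //; exact: eact_inj.
- exact: eact_inj.
- move=> k /andP[_ hk]; apply/negP => /existsP [s /andP[hs /eqP hlast]].
  have := del_path i hs; rewrite hlast rt_id // rt_id ?zero_inC // del_zero size_tuple.
  by rewrite add0n leqNgt hk.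
Qed.

Lemma NN_gt0 p n (i : 'I_p) : 0 < NN n i.
Proof. exact: order_gt0. Qed.

Lemma phi_pos p n (i : 'I_p) (v : vert p n) : inC i v ->
  phi i v = iter ((NN n i - pos i v) %% NN n i) (eact i) (zero p n) /\
  pos i (phi i v) = (NN n i - pos i v) %% NN n i /\
  (pos i v = 0 -> (NN n i - pos i v) %% NN n i = 0) /\
  (0 < pos i v -> (NN n i - pos i v) %% NN n i = NN n i - pos i v).
Proof.
move=> hv; have hl := pos_lt hv; have h0 := NN_gt0 n i.
have E : phi i v = iter ((NN n i - pos i v) %% NN n i) (eact i) (zero p n) by [].
split=> //; split; first by rewrite E /pos findex_iter // ltn_pmod.
split; first by move->; rewrite subn0 modnn.
by move=> hp; rewrite modn_small //; lia.
Qed.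

Lemma part2 p n (i : 'I_p) (v : vert p n) : inC i v ->
  forall v' : vert p n, inC i v' ->
     (dist (zero p n) v' = dist (zero p n) v) <-> (v' = v \/ v' = phi i v).
Proof.
move=> hv v' hv'; rewrite (dist_del hv) (dist_del hv').
have [Ephi [Pphi [H0 H1]]] := phi_pos hv.
have hl := pos_lt hv; have hl' := pos_lt hv'.
split.
- rewrite /del => hd.
  have hv1 : v = iter (pos i v) (eact i) (zero p n) by rewrite /pos iter_findex.
  have hv2 : v' = iter (pos i v') (eact i) (zero p n) by rewrite /pos iter_findex.
  case: (posnP (pos i v)) => hp.
    have := H0 hp; rewrite hp in hd * => _; left; rewrite hv1 hv2 hp; congr iter; lia.
  have := H1 hp => E.
  have : pos i v' = pos i v \/ pos i v' = NN n i - pos i v by lia.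
  case=> E'; [left | right]; rewrite hv2 E'.
    by rewrite /pos iter_findex.
  by rewrite Ephi E.
- have hphi : inC i (phi i v) by rewrite Ephi; exact: fconnect_iter.
  case=> ->; rewrite // /del Pphi.
  case: (posnP (pos i v)) => hp; [rewrite H0 // hp | rewrite H1 //]; lia.
Qed.

Definition Gs p (a : 'I_p.+1) (s : seq 'I_p.+1) :=
  ~~ has (bad a) s && ((s == [::]) || (head ord0 s == a)).

Lemma act_nseq0 p (c : 'I_p.+1) k : act c (nseq k ord0) = nseq k c.
Proof. by have := act_nseq c k [::]; rewrite !cats0. Qed.

Lemma K_act p (a c : 'I_p.+1) y s : Gs a s -> a != ord0 ->
  ~~ ((c == a) && ~~ has (bad a) y) -> act c (y ++ s) = act c y ++ s.
Proof.
move=> /andP[hs hs2] a0 hc.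
case hy: (has (fun x => x != ord0) y); first exact: act_cat_nz.
have Ey : y = nseq (size y) ord0.
  move: (negbT hy); elim: (y) => //= x y' IH.
  by rewrite negb_or negbK => /andP[/eqP -> /IH <-].
rewrite Ey act_nseq act_nseq0; congr (_ ++ _).
case: s hs hs2 => // x w hs /= /eqP xa; subst x.
rewrite (negbTE a0); case: eqP => // ca; subst c.
move: hc; rewrite eqxx /= Ey has_nseq /bad eqxx /=.
by case: (size y).
Qed.

Lemma nz_nseq p (y : seq 'I_p.+1) : ~~ has (fun x => x != ord0) y -> y = nseq (size y) ord0.
Proof.
elim: y => //= x y' IH.
by rewrite negb_or negbK => /andP[/eqP -> /IH <-].
Qed.

Lemma K_pre p (a c : 'I_p.+1) y y' t s : Gs a s -> a != ord0 ->
  size y = size y' -> act c (y ++ t) = y' ++ s ->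
  ~~ ((c == a) && ~~ has (bad a) (y ++ t)) -> t = s.
Proof.
move=> /andP[hs hs2] a0 hsz E hc.
case hy: (has (fun x => x != ord0) y).
  move: E; rewrite act_cat_nz // => /eqP; rewrite eqseq_cat ?size_act //.
  by case/andP=> _ /eqP.
move: E hc; rewrite (nz_nseq (negbT hy)) act_nseq => /eqP.
rewrite eqseq_cat ?size_nseq // => /andP[_ /eqP E].
case: s E hs hs2 => [|x w].
  by case: t => // ? ?; rewrite /=; case: ifP => //; case: ifP.
case: t => [//|t0 t'] /=.
case: eqP => [t00|t0n0].
  case=> ca E hw /eqP xa; subst; rewrite eqxx /= has_cat has_nseq /bad eqxx /=.
  rewrite negbK andbF /= => h; move: hw; rewrite negb_or hasbad_act => /andP[_ /negP []].
  exact: h.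
case: (t0 =P c) => [t0c|t0nc]; first by case=> x0 _ _ /eqP xa; subst; rewrite eqxx in a0.
by case=> -> ->.
Qed.

Lemma gen_eq p (i j : 'I_p) : (gen j == gen i) = (j == i).
Proof. exact: (inj_eq (@gen_inj p)). Qed.

Lemma size_takek p n k (u : vert p n) : k <= n -> size (take k (val u)) = k.
Proof. by move=> h; rewrite size_take size_tuple; case: ltngtP h. Qed.

Lemma L_isC p n (i : 'I_p) k s (u : vert p n) j :
  drop k (val u) = s -> Gs (gen i) s ->
  isCedge i (u, j) = (j == i) && ~~ has (bad (gen i)) (take k (val u)).
Proof.
move=> hu /andP[hs _]; rewrite /isCedge /= inCE -(cat_take_drop k (val u)) has_cat hu.
by rewrite negb_or hs andbT.
Qed.

Lemma L_act p n (i : 'I_p) k s (u : vert p n) j :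
  drop k (val u) = s -> Gs (gen i) s -> ~~ isCedge i (u, j) ->
  val (eact j u) = act (gen j) (take k (val u)) ++ s.
Proof.
move=> hu hs; rewrite (L_isC _ hu hs) /= -hu => hc.
rewrite -[X in act _ X](cat_take_drop k (val u)) (@K_act p (gen i)) ?hu ?gen_eq //; exact: gen_neq0.
Qed.

Lemma L_pre p n (i : 'I_p) k s (y : vert p n) j : k <= n ->
  Gs (gen i) s -> ~~ isCedge i (y, j) -> drop k (val (eact j y)) = s ->
  drop k (val y) = s.
Proof.
move=> hk hs hc hd.
apply: (@K_pre p (gen i) (gen j) (take k (val y)) (take k (val (eact j y)))) => //.
- by rewrite !size_takek.
- by rewrite cat_take_drop -hd cat_take_drop.
- by move: hc; rewrite /isCedge /= inCE cat_take_drop gen_eq.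
Qed.

Definition sig p n k (s : seq 'I_p.+1) (u : vert p n) : vert p n :=
  insubd u (take k (val u) ++ s).

Lemma val_sig p n k s (u : vert p n) : k <= n -> size s = n - k ->
  val (sig k s u) = take k (val u) ++ s.
Proof.
move=> hk hs; rewrite /sig val_insubd size_cat size_takek // hs subnKC //.
by rewrite eqxx.
Qed.

Lemma T1 p n k s' (u : vert p n) : k <= n -> size s' = n - k ->
  drop k (val (sig k s' u)) = s' /\ take k (val (sig k s' u)) = take k (val u).
Proof.
move=> hk hs'; rewrite val_sig //.
by rewrite drop_size_cat ?take_size_cat ?size_takek.
Qed.

Lemma vert_eq p n k (u w : vert p n) :
  take k (val u) = take k (val w) -> drop k (val u) = drop k (val w) -> u = w.
Proof.
by move=> h1 h2; apply: val_inj; rewrite -(cat_take_drop k (val u)) h1 h2 cat_take_drop.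
Qed.

Lemma T2 p n (i : 'I_p) k s s' (u : vert p n) j : k <= n ->
  Gs (gen i) s -> Gs (gen i) s' -> size s' = n - k -> drop k (val u) = s ->
  isCedge i (sig k s' u, j) = isCedge i (u, j).
Proof.
move=> hk hs hs' hsz hu; have [h1 h2] := T1 u hk hsz.
by rewrite (L_isC _ h1 hs') (L_isC _ hu hs) h2.
Qed.

Lemma T3 p n (i : 'I_p) k s s' (u : vert p n) j : k <= n ->
  Gs (gen i) s -> Gs (gen i) s' -> size s' = n - k -> drop k (val u) = s ->
  ~~ isCedge i (u, j) ->
  drop k (val (eact j u)) = s /\ sig k s' (eact j u) = eact j (sig k s' u).
Proof.
move=> hk hs hs' hsz hu hc; have [h1 h2] := T1 u hk hsz.
have hc' : ~~ isCedge i (sig k s' u, j) by rewrite (T2 j hk hs hs' hsz hu).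
have E := L_act hu hs hc; have E' := L_act h1 hs' hc'.
have hd : drop k (val (eact j u)) = s.
  by rewrite E drop_size_cat // size_act size_takek.
split=> //; have [h3 h4] := T1 (eact j u) hk hsz.
apply: (@vert_eq _ _ k).
  by rewrite h4 E' E h2 !take_size_cat // size_act size_takek.
by rewrite h3 E' drop_size_cat // size_act size_takek.
Qed.

Lemma T4 p n k s s' (u w : vert p n) : k <= n -> size s' = n - k ->
  drop k (val u) = s -> drop k (val w) = s -> sig k s' u = sig k s' w -> u = w.
Proof.
move=> hk hsz hu hw E; apply: (@vert_eq _ _ k); last by rewrite hu hw.
by rewrite -(T1 u hk hsz).2 E (T1 w hk hsz).2.
Qed.

Lemma T5 p n (i : 'I_p) k s s' (x y : vert p n) : k <= n ->
  Gs (gen i) s -> Gs (gen i) s' -> size s' = n - k -> drop k (val x) = s ->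
  adjD i x y -> drop k (val y) = s /\ adjD i (sig k s' x) (sig k s' y).
Proof.
move=> hk hs hs' hsz hx /existsP [j /orP [/andP [hc /eqP E] | /andP [hc /eqP E]]].
  have [hd hcomm] := T3 hk hs hs' hsz hx hc.
  rewrite -E; split=> //; apply/existsP; exists j; apply/orP; left.
  by rewrite (T2 j hk hs hs' hsz hx) hc hcomm eqxx.
have hy : drop k (val y) = s by apply: (L_pre hk hs hc); rewrite E.
have [hd hcomm] := T3 hk hs hs' hsz hy hc.
split=> //; apply/existsP; exists j; apply/orP; right.
by rewrite (T2 j hk hs hs' hsz hy) hc -hcomm E eqxx.
Qed.

Lemma T6 p n (i : 'I_p) k s s' (x y : vert p n) : k <= n ->
  Gs (gen i) s -> Gs (gen i) s' -> size s' = n - k -> drop k (val x) = s ->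
  connect (adjD i) x y -> drop k (val y) = s /\ connect (adjD i) (sig k s' x) (sig k s' y).
Proof.
move=> hk hs hs' hsz hx /connectP [q hq ->].
elim: q x hx hq => [|z q IH] x hx /=; first by split=> //; exact: connect0.
case/andP=> hxz /IH hq.
have [hz h1] := T5 hk hs hs' hsz hx hxz.
have [h2 h3] := hq hz; split=> //.
exact: connect_trans (connect1 h1) h3.
Qed.

Lemma dec_iso p n (i : 'I_p) k (v1 v2 : vert p n) : k <= n ->
  take k (val v1) = take k (val v2) ->
  Gs (gen i) (drop k (val v1)) -> Gs (gen i) (drop k (val v2)) ->
  graph_iso (decV i v1) (decV i v2) (decE i v1) (decE i v2).
Proof.
move=> hk ht.
set s1 := drop k (val v1); set s2 := drop k (val v2) => hs1 hs2.
have hz1 : size s1 = n - k by rewrite size_drop size_tuple.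
have hz2 : size s2 = n - k by rewrite size_drop size_tuple.
pose f := @sig p n k s2; pose g := @sig p n k s1.
have fv1 : f v1 = v2.
  by apply: (@vert_eq _ _ k); rewrite ?(T1 v1 hk hz2).1 ?(T1 v1 hk hz2).2.
have gv2 : g v2 = v1.
  by apply: (@vert_eq _ _ k); rewrite ?(T1 v2 hk hz1).1 ?(T1 v2 hk hz1).2.
have D1 : forall x, x \in decV i v1 -> drop k (val x) = s1 /\ f x \in decV i v2.
  move=> x; rewrite !inE => hx.
  have [h1 h2] := T6 hk hs1 hs2 hz2 (erefl s1) hx; split=> //.
  by rewrite -fv1.
have D2 : forall y, y \in decV i v2 -> drop k (val y) = s2 /\ g y \in decV i v1.
  move=> y; rewrite !inE => hy.
  have [h1 h2] := T6 hk hs2 hs1 hz1 (erefl s2) hy; split=> //.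
  by rewrite -gv2.
have fg : forall y, drop k (val y) = s2 -> f (g y) = y.
  move=> y hy; apply: (@vert_eq _ _ k).
    by rewrite (T1 _ hk hz2).2 (T1 _ hk hz1).2.
  by rewrite (T1 _ hk hz2).1.
have finj : forall a b, drop k (val a) = s1 -> drop k (val b) = s1 ->
    (f a == f b) = (a == b).
  by move=> a b ha hb; apply/eqP/eqP => [/(T4 hk hz2 ha hb)|->].
have Him : f @: decV i v1 = decV i v2.
  apply/eqP; rewrite eqEsubset; apply/andP; split; apply/subsetP.
    by move=> _ /imsetP [x hx ->]; exact: (D1 x hx).2.
  move=> y hy; have [h1 h2] := D2 y hy; apply/imsetP; exists (g y) => //.
  by rewrite fg.
exists f; split => //.
  by move=> a b ha hb /eqP; rewrite finj ?(D1 a ha).1 ?(D1 b hb).1 // => /eqP.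
move=> x y hx hy; rewrite /mult.
have [hx1 _] := D1 x hx; have [hy1 _] := D1 y hy.
pose h := fun e : edge p n => (f e.1, e.2).
set A := [set e in decE i v1 | _]; set B := [set e in decE i v2 | _].
have decEE : forall v (e : edge p n), (e \in decE i v) = ~~ isCedge i e && (src e \in decV i v).
  by move=> v e; rewrite /decE in_set.
have inA : forall e, (e \in A) = (e \in decE i v1) &&
    ((src e == x) && (tgt e == y) || (src e == y) && (tgt e == x)).
  by move=> e; rewrite [LHS]in_set.
have inB : forall e, (e \in B) = (e \in decE i v2) &&
    ((src e == f x) && (tgt e == f y) || (src e == f y) && (tgt e == f x)).
  by move=> e; rewrite [LHS]in_set.
have key : forall e, e.1 \in decV i v1 -> (h e \in B) = (e \in A).
  case=> u j hu /=; have [hu1 hu2] := D1 u hu.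
  rewrite inA inB !decEE /src /tgt /= (T2 j hk hs1 hs2 hz2 hu1) hu2 hu.
  case hc: (isCedge i (u, j)) => //=.
  have [hd hcomm] := T3 hk hs1 hs2 hz2 hu1 (negbT hc).
  by rewrite -hcomm !finj.
have hB : B = h @: A.
  apply/eqP; rewrite eqEsubset; apply/andP; split; apply/subsetP.
    case=> u' j he'; have := he'; rewrite inB decEE => /andP [/andP [_ hu'] _].
    move: hu'; rewrite /src /= -Him => /imsetP [u hu Eu].
    have Eh : (u', j) = h (u, j) by rewrite /h /= -Eu.
    apply/imsetP; exists (u, j) => //.
    by rewrite -key // -Eh.
  move=> _ /imsetP [e he ->]; rewrite key //.
  by move: he; rewrite inA decEE => /andP [/andP [_ ->] _].
rewrite hB card_in_imset //.
case=> [u j] [u' j'] he he' [/eqP E ->]; congr (_, _); apply/eqP.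
move: he he'; rewrite !inA !decEE /src /= => /andP [/andP [_ hu] _] /andP [/andP [_ hu'] _].
by rewrite -finj ?(D1 _ hu).1 ?(D1 _ hu').1.
Qed.

Lemma iter_inj_gen (T : Type) (f : T -> T) m : injective f -> injective (iter m f).
Proof. by move=> hf; elim: m => //= m IH x y /hf /IH. Qed.

Lemma R_size p n (i : 'I_p) (v : vert p n) :
  size (map (compc (gen i)) (val (eact i v))) == n.
Proof. by rewrite size_map size_tuple. Qed.

Definition Rt p n (i : 'I_p) (v : vert p n) : vert p n := Tuple (R_size i v).

Lemma Rt_step p n (i : 'I_p) (w : vert p n) : inC i w ->
  eact i (Rt i (eact i w)) = Rt i w.
Proof.
rewrite inCE => hw; apply: val_inj => /=.
by rewrite comp_act ?gen_neq0 // hasbad_act.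
Qed.

Lemma Rt_iter p n (i : 'I_p) (w : vert p n) m : inC i w ->
  iter m (eact i) (Rt i (iter m (eact i) w)) = Rt i w.
Proof.
move=> hw; elim: m => // m IH.
rewrite iterSr iterS Rt_step //; exact: (connect_trans hw (fconnect_iter _ _ _)).
Qed.

Lemma Rt_zero p n (i : 'I_p) : Rt i (zero p n) = zero p n.
Proof.
apply: val_inj => /=; rewrite act_nseq0 map_nseq /compc (negbTE (gen_neq0 i)) eqxx.
by [].
Qed.

Lemma phi_R p n (i : 'I_p) (v : vert p n) : inC i v -> phi i v = Rt i v.
Proof.
move=> hv; have [Ephi [_ [H0 H1]]] := phi_pos hv.
have hl := pos_lt hv.
have Ev : v = iter (pos i v) (eact i) (zero p n) by rewrite /pos iter_findex.
apply: (@iter_inj_gen _ _ (pos i v) (@eact_inj p n i)).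
have := Rt_iter (pos i v) (@zero_inC p n i); rewrite -Ev Rt_zero => ->.
rewrite Ephi -iterD.
case: (posnP (pos i v)) => hp; first by rewrite H0 // hp.
rewrite H1 // subnKC ?(ltnW hl) //; exact: (iter_order (@eact_inj p n i)).
Qed.

Lemma good_decomp p (a : 'I_p.+1) v : ~~ has (bad a) v ->
  exists k w, v = nseq k ord0 ++ w /\ ((w == [::]) || (head ord0 w == a)).
Proof.
elim: v => [|x v IH]; first by exists 0, [::].
rewrite /= negb_or => /andP [hx /IH [k [w [E hw]]]].
case: (x =P ord0) => [->|x0]; first by exists k.+1, w; rewrite E.
exists 0, (x :: v); split=> //=.
by move: hx; rewrite /bad negb_and !negbK; case/orP => // /eqP.
Qed.

Unset Implicit Arguments.

Theorem proposition4p9 (p n : nat) (i : 'I_p) (hp : 0 < p) (hn : 0 < n)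
    (v : vert p n) (hv : inC i v) :
  graph_iso (decV i v) (decV i (phi i v)) (decE i v) (decE i (phi i v)) /\
  (forall v' : vert p n, inC i v' ->
     (dist (zero p n) v' = dist (zero p n) v) <-> (v' = v \/ v' = phi i v)).
Proof.
split; last exact: part2.
have hv' := hv; rewrite inCE in hv'.
have a0 := gen_neq0 i.
have [k [w [E hw]]] := good_decomp hv'.
have hwg : ~~ has (bad (gen i)) w by move: hv'; rewrite E has_cat negb_or => /andP[].
have Ephi : val (phi i v) = nseq k ord0 ++ map (compc (gen i)) (act (gen i) w).
  rewrite phi_R // /= E act_nseq map_cat map_nseq /compc (negbTE a0) eqxx.
  by [].
have hk : k <= n by rewrite -(size_tuple v) E size_cat size_nseq leq_addr.
apply: (@dec_iso p n i k) => //.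
- by rewrite Ephi E !take_size_cat ?size_nseq.
- by rewrite E drop_size_cat ?size_nseq // /Gs hwg.
- rewrite Ephi drop_size_cat ?size_nseq // /Gs comp_good ?hasbad_act //=.
  case: w hw {E hwg Ephi} => //= x w /eqP ->.
  by rewrite (negbTE a0) eqxx /= /compc eqxx.
Qed.
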